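(* Let $A=\mathbb{C}[x,y,z]$ and let $F=(f,g,h)\in A^3$ be a Poisson triple on $A$. Then $F$ is cm-exact: there exist a maximal ideal $M$ of $A$ and elements $a,b\in\widehat A$ (the $M$-adic completion of $A$) such that $F=b\,\mathrm{grad}(a)$, i.e. $f=b\,\partial a/\partial x$, $g=b\,\partial a/\partial y$, $h=b\,\partial a/\partial z$.
   Context: For a commutative $\mathbb{C}$-algebra $B\in\{A,\widehat A\}$ and $F=(f,g,h)\in B^3$, $F$ is called a Poisson triple on $B$ if there is a Poisson bracket $\{-,-\}$ on $B$ (a Lie bracket such that each $\{b,-\}$ is a $\mathbb{C}$-derivation) with $\{y,z\}=f$, $\{z,x\}=g$, $\{x,y\}=h$. The partial derivatives $\partial/\partial x,\partial/\partial y,\partial/\partial z$ of $A$ extend uniquely to continuous derivations of $\widehat A$, and $\mathrm{grad}(a)=(\partial a/\partial x,\partial a/\partial y,\partial a/\partial z)$. *)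

(* Defs.v *)
From HB Require Import structures.
From mathcomp Require Import all_boot all_order all_algebra.
From mathcomp Require Import reals complex.
From mathcomp Require Import mpoly.

Set Implicit Arguments.
Unset Strict Implicit.
Unset Printing Implicit Defensive.
Import GRing.Theory Num.Theory.
Local Open Scope ring_scope.

(* The complex numbers: C = R[i] for R the (unique up to isomorphism)
   complete archimedean ordered field, given as an abstract realType. *)
Definition CC (R : realType) := R[i].

Definition polyA (R : realType) := {mpoly (CC R)[3]}.

Section Defs.
Variable R : realType.
Local Notation A := (polyA R).

Definition xA : A := 'X_(0 : 'I_3).
Definition yA : A := 'X_(1 : 'I_3).
Definition zA : A := 'X_(2 : 'I_3).

Definition is_lie_bracket (br : A -> A -> A) : Prop :=
  [/\ (forall (c : CC R) (a b d : A), br (c *: a + b) d = c *: br a d + br b d),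
      (forall (c : CC R) (a b d : A), br d (c *: a + b) = c *: br d a + br d b),
      (forall a : A, br a a = 0) &
      (forall a b d : A, br a (br b d) + br b (br d a) + br d (br a b) = 0)].

Definition is_derivation_bracket (br : A -> A -> A) : Prop :=
  forall b : A,
    (forall (c : CC R) (u v : A), br b (c *: u + v) = c *: br b u + br b v) /\
    (forall u v : A, br b (u * v) = br b u * v + u * br b v).

Definition is_poisson_bracket (br : A -> A -> A) : Prop :=
  is_lie_bracket br /\ is_derivation_bracket br.

Definition poisson_triple (f g h : A) : Prop :=
  exists br : A -> A -> A, is_poisson_bracket br /\
    [/\ br yA zA = f, br zA xA = g & br xA yA = h].

Definition is_ideal (I : A -> Prop) : Prop :=
  [/\ I 0,
      (forall u v, I u -> I v -> I (u + v)) &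
      (forall r u, I u -> I (r * u))].

Definition is_maximal_ideal (M : A -> Prop) : Prop :=
  [/\ is_ideal M, ~ M 1 &
      forall J : A -> Prop, is_ideal J -> (forall u, M u -> J u) ->
        (forall u, J u <-> M u) \/ J 1].

Definition ideal_mul (I J : A -> Prop) : A -> Prop :=
  fun p => exists s : seq (A * A),
    (forall uv, uv \in s -> I uv.1 /\ J uv.2) /\
    p = \sum_(uv <- s) (uv.1 * uv.2).

Fixpoint ideal_pow (M : A -> Prop) (n : nat) : A -> Prop :=
  match n with
  | 0 => fun _ => True
  | n'.+1 => ideal_mul M (ideal_pow M n')
  end.

(* ---------- M-adic completion of A ----------
   An element of the completion  \hat A = lim_n A / M^n  is represented by a
   compatible sequence of lifts (a_n)_n, a_(n+1) = a_n mod M^n; two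
   representatives define the same element iff a_n = b_n mod M^n for all n. *)
Definition compl_elt (M : A -> Prop) (a : nat -> A) : Prop :=
  forall n, ideal_pow M n (a n.+1 - a n).

Definition compl_eq (M : A -> Prop) (a b : nat -> A) : Prop :=
  forall n, ideal_pow M n (a n - b n).

Definition compl_of (p : A) : nat -> A := fun _ => p.

Definition compl_mul (a b : nat -> A) : nat -> A := fun n => a n * b n.

(* continuous extension of d/dx_i to \hat A; the shift makes it well
   defined, since d(M^(n+1)) is contained in M^n *)
Definition compl_deriv (i : 'I_3) (a : nat -> A) : nat -> A :=
  fun n => mderiv i (a n.+1).

Definition cm_exact (f g h : A) : Prop :=
  exists M : A -> Prop, is_maximal_ideal M /\
  exists a b : nat -> A, [/\ compl_elt M a, compl_elt M b,
    compl_eq M (compl_of f) (compl_mul b (compl_deriv 0 a)),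
    compl_eq M (compl_of g) (compl_mul b (compl_deriv 1 a)) &
    compl_eq M (compl_of h) (compl_mul b (compl_deriv 2 a))].

End Defs.

(* Main.v *)
Require Import Defs.
From HB Require Import structures.
From mathcomp Require Import all_boot all_order all_algebra.
From mathcomp Require Import reals complex.
From mathcomp Require Import mpoly.
From mathcomp Require Import ring.
From Stdlib Require Classical_Prop.
Set Implicit Arguments.
Unset Strict Implicit.
Unset Printing Implicit Defensive.
Import GRing.Theory Num.Theory.
Local Open Scope ring_scope.

Section IdealPow.
Variable R : realType.
Local Notation A := (polyA R).
Variable M : A -> Prop.
Hypothesis HM : is_ideal M.
Local Notation P := (ideal_pow M).

Lemma P_ideal n : is_ideal (P n).
Proof.
case: n => [|n] /=; first by split.
case: HM => M0 MD MM.
split.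
- by exists [::]; split => //; rewrite big_nil.
- move=> u v [s [Hs ->]] [t [Ht ->]]; exists (s ++ t); split; last by rewrite big_cat.
  by move=> uv; rewrite mem_cat => /orP [/Hs|/Ht].
- move=> r u [s [Hs ->]]; exists [seq (r * uv.1, uv.2) | uv <- s]; split.
    move=> uv /mapP [w /Hs [H1 H2] ->] /=; split => //; exact: MM.
  by rewrite big_map mulr_sumr; apply: eq_bigr => uv _ /=; rewrite mulrA.
Qed.

Lemma P0 n : P n 0. Proof. by case: (P_ideal n). Qed.
Lemma PD n u v : P n u -> P n v -> P n (u + v). Proof. by case: (P_ideal n) => _ H _; apply: H. Qed.
Lemma PM n r u : P n u -> P n (r * u). Proof. by case: (P_ideal n) => _ _ H; apply: H. Qed.
Lemma PMr n r u : P n u -> P n (u * r). Proof. by rewrite mulrC; apply: PM. Qed.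
Lemma PN n u : P n u -> P n (- u). Proof. by move=> H; rewrite -mulN1r; apply: PM. Qed.
Lemma PB n u v : P n u -> P n v -> P n (u - v). Proof. by move=> H1 H2; apply: PD => //; apply: PN. Qed.
Lemma PZ n (c : CC R) u : P n u -> P n (c *: u).
Proof. by move=> H; rewrite -mul_mpolyC; apply: PM. Qed.
Lemma Psum n (I : Type) (r : seq I) (F : I -> A) :
  (forall i, P n (F i)) -> P n (\sum_(i <- r) F i).
Proof. move=> H; elim/big_ind: _ => //; [exact: P0| exact: PD]. Qed.
Lemma Psum_in n (I : eqType) (r : seq I) (F : I -> A) :
  (forall i, i \in r -> P n (F i)) -> P n (\sum_(i <- r) F i).
Proof.
elim: r => [|x r IH] H; first by rewrite big_nil; exact: P0.
rewrite big_cons; apply: PD; first by apply: H; rewrite inE eqxx.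
by apply: IH => i Hi; apply: H; rewrite inE Hi orbT.
Qed.
Lemma PMn n u k : P n u -> P n (u *+ k).
Proof. by move=> H; rewrite -mulr_natl; apply: PM. Qed.

Lemma PS n m u : M m -> P n u -> P n.+1 (m * u).
Proof.
move=> Hm Hu; exists [:: (m, u)]; split; last by rewrite big_seq1.
by move=> uv; rewrite inE => /eqP ->.
Qed.

Lemma P1 u : P 1 u <-> M u.
Proof.
split.
- case: HM => M0 MD MM.
  move=> [s [Hs ->]]; rewrite big_seq; elim/big_rec: _ => // uv x /Hs [H1 _] Hx.
  by apply: MD => //; rewrite mulrC; apply: MM.
- by move=> H; rewrite -[u]mulr1; apply: PS.
Qed.


Lemma PSn n u : P n.+1 u -> P n u.
Proof.
elim: n u => [//|n IH] u [s [Hs ->]].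
apply: Psum_in => uv /Hs [H1 H2].
by apply: PS => //; apply: IH.
Qed.

Lemma Ple n m u : (m <= n)%N -> P n u -> P m u.
Proof.
move=> /subnK <-; elim: (n - m)%N => [//|k IH] H.
by apply: IH; apply: PSn; rewrite -addSn.
Qed.

Lemma Padd a b u w : P a u -> P b w -> P (a + b) (u * w).
Proof.
elim: a u => [|a IH] u.
  by move=> _ Hw; rewrite add0n; apply: PM.
move=> [s [Hs ->]] Hw; rewrite addSn mulr_suml; apply: Psum_in => uv /Hs [H1 H2].
by rewrite -mulrA; apply: PS => //; apply: IH.
Qed.

Lemma PX n m : M m -> P n (m ^+ n).
Proof.
move=> Hm; elim: n => [//|n IH]; by rewrite exprS; apply: PS.
Qed.

Lemma Pderiv (D : A -> A) :
  (forall u v, D (u + v) = D u + D v) ->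
  (forall u v, D (u * v) = D u * v + u * D v) ->
  forall n u, P n.+1 u -> P n (D u).
Proof.
move=> DD DM; elim=> [//|n IH] u [s [Hs ->]].
have Hs' := Hs.
have D0 : D 0 = 0.
  by have := DD 0 0; rewrite addr0 => /eqP; rewrite -subr_eq0 opprD addrA subrr sub0r oppr_eq0 => /eqP.
rewrite big_seq; elim/big_rec: _ => [|uv x /Hs [H1 H2] Hx]; first by rewrite D0; apply: P0.
rewrite DD DM; apply: PD => //; apply: PD.
  have := @PM n.+1 (D uv.1) uv.2 H2. move=> H; exact: H.
by apply: PS => //; exact: (IH _ H2).
Qed.

End IdealPow.

Section Kern.
Variable R : realType.
Local Notation A := (polyA R).
Definition Mker (v : 'I_3 -> CC R) : A -> Prop := fun p => p.@[v] = 0.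

Lemma Mker_ideal v : is_ideal (Mker v).
Proof.
rewrite /Mker; split; first by rewrite meval0.
  by move=> u w Hu Hw; rewrite mevalD Hu Hw addr0.
by move=> r u Hu; rewrite mevalM Hu mulr0.
Qed.

Lemma Mker_max v : is_maximal_ideal (Mker v).
Proof.
split; first exact: Mker_ideal.
  by rewrite /Mker meval1; apply/eqP; rewrite oner_eq0.
move=> J [J0 JD JM] HJ.
case: (Classical_Prop.classic (exists u, J u /\ ~ Mker v u)) => [[u [Ju Mu]]|H]; [right|left].
  have Hc : u.@[v] != 0 by apply/eqP.
  have H1 : J (u - (u.@[v])%:MP) by apply: HJ; rewrite /Mker mevalB mevalC subrr.
  have H2 : J ((u.@[v])%:MP).
    have -> : (u.@[v])%:MP = u + (-1) * (u - (u.@[v])%:MP) by rewrite mulN1r opprB addrC subrK.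
    by apply: JD => //; apply: JM.
  have -> : (1 : A) = ((u.@[v])^-1)%:MP * (u.@[v])%:MP by rewrite -mpolyCM mulVf.
  by apply: JM.
move=> u; split; last exact: HJ.
move=> Ju; apply: Classical_Prop.NNPP => Mu; apply: H; by exists u.
Qed.
End Kern.

Section Deriv.
Variable R : realType.
Local Notation A := (polyA R).
Variable D : A -> A.
Hypothesis DL : forall (c : CC R) (u v : A), D (c *: u + v) = c *: D u + D v.
Hypothesis DM : forall u v : A, D (u * v) = D u * v + u * D v.

Definition Eder (q : A) : A := \sum_(i < 3) q^`M(i) * D 'X_i.

Lemma D0 : D 0 = 0.
Proof.
have H := DL 1 0 0; rewrite !scale1r addr0 in H.
by apply: (addrI (D 0)); rewrite addr0 -H.
Qed.
Lemma DD u v : D (u + v) = D u + D v.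
Proof. by have := DL 1 u v; rewrite !scale1r. Qed.
Lemma DZ c u : D (c *: u) = c *: D u.
Proof. by rewrite -[c *: u]addr0 DL D0 addr0. Qed.
Lemma D1 : D 1 = 0.
Proof.
have H := DM 1 1; rewrite !mul1r mulr1 in H.
by apply: (addrI (D 1)); rewrite addr0 -H.
Qed.

Lemma Eder_der : forall u v, Eder (u * v) = Eder u * v + u * Eder v.
Proof.
move=> u v; rewrite /Eder mulr_suml mulr_sumr -big_split /=.
by apply: eq_bigr => i _; rewrite mderivM; ring.
Qed.

Lemma Eder_add u v : Eder (u + v) = Eder u + Eder v.
Proof. by rewrite /Eder -big_split; apply: eq_bigr => i _; rewrite mderivD mulrDl. Qed.

Lemma Eder_scale c u : Eder (c *: u) = c *: Eder u.
Proof. by rewrite /Eder scaler_sumr; apply: eq_bigr => i _; rewrite mderivZ scalerAl. Qed.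

Lemma Eder_X i : Eder 'X_i = D 'X_i.
Proof.
rewrite /Eder (bigD1 i) //= big1 ?addr0.
  rewrite mderivX mnm1E eqxx.
  have -> : (U_(i) - U_(i) = 0)%MM by apply/mnmP => j; rewrite !mnmE subnn.
  by rewrite mpolyX0 scale1r mul1r.
move=> j Hj; rewrite mderivX mnm1E eq_sym (negbTE Hj) scale0r mul0r //.
Qed.

Lemma D_expand q : D q = Eder q.
Proof.
pose S q := D q = Eder q.
have SM u v : S u -> S v -> S (u * v) by rewrite /S Eder_der DM => -> ->.
have S1 : S 1.
  rewrite /S D1 /Eder big1 // => i _; by rewrite -mpolyC1 mderivC mul0r.
have SX m : S 'X_[m].
  rewrite mpolyXE_id; elim/big_ind: _ => //= i _.
  elim: (m i) => [|k IH]; first by rewrite expr0.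
  by rewrite exprS; apply: SM => //; rewrite /S Eder_X.
elim/mpolyind: q => [|c m p _ _ Hp].
  rewrite D0 /Eder big1 // => i _; by rewrite mderiv0 mul0r.
rewrite DL Eder_add Eder_scale Hp.
by rewrite (SX m).
Qed.

End Deriv.

Lemma poisson_integrable (R : realType) (f g h : polyA R) :
  poisson_triple f g h ->
  f * (h^`M(1) - g^`M(2)) + g * (f^`M(2) - h^`M(0)) + h * (g^`M(0) - f^`M(1)) = 0.
Proof.
move=> [br [[[L1 L2 Alt Jac] Der] [Hf Hg Hh]]].
have Dexp b q : br b q = Eder (br b) q.
  by apply: D_expand; [case: (Der b) | case: (Der b)].
have Skew a b : br a b = - br b a.
  have E1 := L1 1 a b (a + b); have E2 := L2 1 a b a; have E3 := L2 1 a b b.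
  rewrite !scale1r in E1 E2 E3.
  have := Alt (a + b); rewrite E1 E2 E3 !Alt add0r addr0.
  by move/eqP; rewrite addr_eq0 => /eqP.
have := Jac (xA R) (yA R) (zA R).
rewrite Hf Hg Hh !Dexp /Eder !big_ord_recl big_ord0 !addr0.
rewrite -/(xA R) -/(yA R) -/(zA R).
rewrite !big_ord0 !addr0.
have e1 : lift ord0 ord0 = 1 :> 'I_3 by apply: val_inj.
have e2 : lift ord0 (lift ord0 ord0) = 2 :> 'I_3 by apply: val_inj.
have e0 : ord0 = 0 :> 'I_3 by apply: val_inj.
rewrite e1 e2 e0 !Alt (Skew (yA R) (xA R)) (Skew (zA R) (yA R)) (Skew (xA R) (zA R)) Hf Hg Hh.
move=> H; rewrite -[RHS]oppr0 -H; ring.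
Qed.

Lemma exists_nonroot (R : realType) (Q : {poly CC R}) : Q != 0 -> exists t, ~~ root Q t.
Proof.
move=> HQ; apply: Classical_Prop.NNPP => H.
have Hall : forall t, root Q t.
  move=> t; apply: Classical_Prop.NNPP => Ht; apply: H; exists t; exact/negP.
pose rs := [seq (i%:R : CC R) | i <- iota 0 (size Q)].
have Hlt : (size rs < size Q)%N.
  apply: max_poly_roots HQ _ _.
    by apply/allP => t _; apply: Hall.
  rewrite map_inj_uniq ?iota_uniq // => a b /eqP; rewrite eqr_nat => /eqP //.
by move: Hlt; rewrite size_map size_iota ltnn.
Qed.

Lemma arith_inj (D a0 b0 x y : nat) : (a0 < D)%N -> (b0 < D)%N ->
  (a0 + D * x = b0 + D * y)%N -> a0 = b0 /\ x = y.
Proof.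
move=> Ha Hb H.
have D0 : (0 < D)%N by apply: leq_ltn_trans Ha.
have E : (x * D + a0 = y * D + b0)%N by rewrite addnC mulnC H addnC mulnC.
have H1 := congr1 (fun z => z %% D)%N E; have H2 := congr1 (fun z => z %/ D)%N E.
simpl in H1, H2.
rewrite !modnMDl !modn_small // in H1.
rewrite !divnMDl // !divn_small // !addn0 in H2.
by [].
Qed.

Lemma exists_point (R : realType) (p : polyA R) : p != 0 ->
  exists v : 'I_3 -> CC R, p.@[v] != 0.
Proof.
move=> Hp.
pose D := msize p.
pose e (m : 'X_{1..3}) := (m ord0 + D * (m (lift ord0 ord0) + D * m (lift ord0 (lift ord0 ord0))))%N.
have Hlt : forall m, m \in msupp p -> forall i, (m i < D)%N.
  move=> m Hm i; apply: leq_ltn_trans (msize_mdeg_lt Hm).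
  by rewrite mdegE (bigD1 i) //= leq_addr.
have einj : forall m m', m \in msupp p -> m' \in msupp p -> e m = e m' -> m = m'.
  move=> m m' Hm Hm' E.
  have [H0 E1] := arith_inj (Hlt _ Hm ord0) (Hlt _ Hm' ord0) E.
  have [H1 H2] := arith_inj (Hlt _ Hm _) (Hlt _ Hm' _) E1.
  apply/mnmP => i.
  have: i = ord0 \/ i = lift ord0 ord0 \/ i = lift ord0 (lift ord0 ord0).
    case: i => [[|[|[|k]]] Hi] //.
    - by left; apply: val_inj.
    - by right; left; apply: val_inj.
    - by right; right; apply: val_inj.
  by case=> [->|[->|->]].
pose Q : {poly CC R} := \sum_(m <- msupp p) p@_m *: 'X^(e m).
have HQ : Q != 0.
  apply/eqP => /(congr1 (fun q : {poly CC R} => q`_(e (mlead p)))).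
  rewrite coef0 /Q coef_sum (bigD1_seq (mlead p)) ?msupp_uniq ?mlead_supp //=.
  rewrite coefZ coefXn eqxx mulr1 big1_seq ?addr0.
    by move/eqP; rewrite mleadc_eq0 (negbTE Hp).
  move=> m /andP [Hne Hm]; rewrite coefZ coefXn.
  case: eqP => [/einj H|]; last by rewrite mulr0.
  by move: Hne; rewrite H ?eqxx ?mlead_supp.
have [t Ht] := exists_nonroot HQ.
exists (fun i : 'I_3 => t ^+ (D ^ i)).
apply: contra Ht => /eqP H; apply/eqP; rewrite -H mevalE /Q horner_sum.
apply: eq_bigr => m _; rewrite hornerZ hornerXn; congr (_ * _).
rewrite !big_ord_recl big_ord0 mulr1 /= -!exprM -!exprD.
congr (_ ^+ _); rewrite /e /= expn0 expn1 mul1n.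
by rewrite /bump /= add1n expnS expn1 mulnDr mulnA.
Qed.

Section Ops.
Variable R : realType.
Local Notation A := (polyA R).
Variable M : A -> Prop.
Hypothesis HM : is_ideal M.
Local Notation P := (ideal_pow M).

Lemma mderivXU (l i : 'I_3) : mderiv l ('X_i : A) = (i == l)%:R.
Proof.
rewrite mderivX mnm1E; case: eqP => [->|_]; last by rewrite scale0r.
have -> : (U_(l) - U_(l) = 0)%MM by apply/mnmP => j; rewrite !mnmE subnn.
by rewrite mpolyX0 scale1r.
Qed.

Lemma mderivXc (l i : 'I_3) (c : CC R) : mderiv l ('X_i - c%:MP : A) = (i == l)%:R.
Proof. by rewrite mderivB mderivC subr0 mderivXU. Qed.

Definition Uop (l k : 'I_3) (al : A) (q : A) : A := mderiv l q - al * mderiv k q.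

Lemma UopD l k al u w : Uop l k al (u + w) = Uop l k al u + Uop l k al w.
Proof. rewrite /Uop !mderivD; ring. Qed.
Lemma UopB l k al u w : Uop l k al (u - w) = Uop l k al u - Uop l k al w.
Proof. rewrite /Uop !mderivB; ring. Qed.
Lemma UopM l k al u w : Uop l k al (u * w) = Uop l k al u * w + u * Uop l k al w.
Proof. rewrite /Uop !mderivM; ring. Qed.
Lemma UopZ l k al (c : CC R) u : Uop l k al (c *: u) = c *: Uop l k al u.
Proof. by rewrite /Uop !mderivZ scalerBr scalerAr. Qed.
Lemma UopP l k al n u : P n.+1 u -> P n (Uop l k al u).
Proof.
move=> H; apply: PB => //; first by apply: (Pderiv HM) => //; [exact: mderivD | exact: mderivM].
apply: PM => //; by apply: (Pderiv HM) => //; [exact: mderivD | exact: mderivM].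
Qed.
Lemma UopPsub l k al n u : P n u -> P (n - 1) (Uop l k al u).
Proof.
case: n => [|n] H; first by [].
by rewrite subn1 /=; apply: UopP.
Qed.
Lemma Uop0 l k al : Uop l k al 0 = 0.
Proof. by rewrite /Uop !mderiv0 mulr0 subr0. Qed.

Lemma UopX l k al (x : A) m : Uop l k al (x ^+ m.+1) = m.+1%:R * x ^+ m * Uop l k al x.
Proof.
elim: m => [|m IH]; first by rewrite expr1 expr0 mulr1 mul1r.
rewrite exprS UopM IH -(addn1 m.+1) natrD exprS; ring.
Qed.

Definition fi (m : nat) : CC R := (m`!%:R)^-1.

Lemma fiS m : fi m.+1 * m.+1%:R = fi m.
Proof.
rewrite /fi factS natrM invfM mulrAC mulVf ?mul1r //.
by rewrite pnatr_eq0.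
Qed.

Lemma fi0 : fi 0 = 1.
Proof. by rewrite /fi fact0 invr1. Qed.

Lemma telesc l k al (x : A) (F : nat -> A) N : Uop l k al x = -1 ->
  \sum_(m < N.+1) Uop l k al (fi m *: x ^+ m * F m) =
  fi N *: x ^+ N * F N.+1 + \sum_(m < N.+1) fi m *: x ^+ m * (Uop l k al (F m) - F m.+1).
Proof.
move=> Hx; elim: N => [|N IH].
  rewrite !big_ord_recr !big_ord0 /= !add0r fi0 !scale1r expr0 !mul1r; ring.
rewrite big_ord_recr /= IH [in RHS]big_ord_recr /=.
rewrite UopM -scalerAl UopZ UopX Hx.
rewrite -[fi N in LHS](fiS N).
set S := \sum_(i < N.+1) _.
rewrite -!mul_mpolyC mpolyCM -mpolyC_nat exprS.
ring.
Qed.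

End Ops.

Section Core.
Variable R : realType.
Local Notation A := (polyA R).
Variable v : 'I_3 -> CC R.
Variables i j k : 'I_3.
Variables f g h : A.
Hypothesis Hij : i != j.
Hypothesis Hjk : j != k.
Hypothesis Hki : k != i.
Hypothesis Hint : f * (h^`M(j) - g^`M(k)) + g * (f^`M(k) - h^`M(i)) + h * (g^`M(i) - f^`M(j)) = 0.
Hypothesis Hh : h.@[v] != 0.
Local Notation M := (Mker v).
Local Notation HM := (Mker_ideal v).
Local Notation P := (ideal_pow M).

Definition nX : A := - ('X_i - (v i)%:MP).
Definition nY : A := - ('X_j - (v j)%:MP).
Definition Zc : A := 'X_k - (v k)%:MP.

Lemma MnX : M nX. Proof. by rewrite /Mker /nX mevalN mevalB mevalXU mevalC subrr oppr0. Qed.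
Lemma MnY : M nY. Proof. by rewrite /Mker /nY mevalN mevalB mevalXU mevalC subrr oppr0. Qed.

Lemma dnX l : mderiv l nX = - (i == l)%:R. Proof. by rewrite /nX mderivN mderivXc. Qed.
Lemma dnY l : mderiv l nY = - (j == l)%:R. Proof. by rewrite /nY mderivN mderivXc. Qed.
Lemma dZ l : mderiv l Zc = (k == l)%:R. Proof. by rewrite /Zc mderivXc. Qed.

Definition cc : CC R := h.@[v].
Definition ww : A := 1 - (cc^-1)%:MP * h.
Lemma Mww : M ww.
Proof. by rewrite /Mker /ww mevalB meval1 mevalM mevalC mulVf ?subrr. Qed.

Definition kk N : A := (cc^-1)%:MP * \sum_(t < N) ww ^+ t.
Lemma hkk N : h * kk N = 1 - ww ^+ N.
Proof.
have E : (cc^-1)%:MP * h = 1 - ww by rewrite /ww opprB addrC subrK.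
rewrite /kk mulrA [h * _]mulrC E.
have H := subrX1 ww N.
have -> : 1 - ww ^+ N = - (ww ^+ N - 1) by rewrite opprB.
rewrite H; ring.
Qed.

Definition al N := f * kk N.
Definition be N := g * kk N.
Definition U1 N := Uop i k (al N).
Definition U2 N := Uop j k (be N).

Definition gam N : A := mderiv i (be N) - mderiv j (al N) + be N * mderiv k (al N) - al N * mderiv k (be N).

Lemma comm12 N q : U2 N (U1 N q) - U1 N (U2 N q) = gam N * mderiv k q.
Proof.
rewrite /U1 /U2 /Uop /gam !mderivB !mderivM.
rewrite (mderiv_comm j i) (mderiv_comm j k) (mderiv_comm i k).
ring.
Qed.

Lemma mderiv1 l : mderiv l (1 : A) = 0.
Proof. by rewrite -mpolyC1 mderivC. Qed.


Lemma ee_P N : P N (h * kk N - 1).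
Proof.
have -> : h * kk N - 1 = - ww ^+ N by rewrite hkk; ring.
apply: (PN HM); exact: (PX N Mww).
Qed.

Lemma gam_key N : h ^+ 2 * gam N =
  (h * kk N) * (f * (h^`M(j) - g^`M(k)) + g * (f^`M(k) - h^`M(i)) + h * (g^`M(i) - f^`M(j)))
  + (h * kk N) * (h * kk N - 1) * (g * f^`M(k) - f * g^`M(k))
  + g * h * mderiv i (h * kk N - 1) - f * h * mderiv j (h * kk N - 1).
Proof.
rewrite /gam /al /be !mderivB !mderivM !mderiv1.
ring.
Qed.

Lemma gam_P N : P N.-1 (gam N).
Proof.
case: N => [|N] //=.
have Hd l : P N (mderiv l (h * kk N.+1 - 1)).
  by apply: (Pderiv HM) => //; [exact: mderivD | exact: mderivM | exact: ee_P].
have H2 : P N (h ^+ 2 * gam N.+1).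
  rewrite gam_key Hint mulr0 add0r.
  apply: (PB HM); first apply: (PD HM).
  - apply: (PMr HM); apply: (PM HM); exact: (PSn HM (ee_P _)).
  - by apply: (PM HM).
  - by apply: (PM HM).
have -> : gam N.+1 = kk N.+1 ^+ 2 * (h ^+ 2 * gam N.+1)
   - gam N.+1 * (h * kk N.+1 - 1) * (h * kk N.+1 + 1) by ring.
apply: (PB HM); first by apply: (PM HM).
by apply: (PMr HM); apply: (PM HM); exact: (PSn HM (ee_P _)).
Qed.

Lemma err_P N m q : P (N.-1 - m) (U2 N (iter m (U1 N) q) - iter m (U1 N) (U2 N q)).
Proof.
elim: m => [|m IH]; first by rewrite /= subrr; exact: (P0 HM).
rewrite !iterS.
set x := iter m (U1 N) q.
have -> : U2 N (U1 N x) - U1 N (iter m (U1 N) (U2 N q)) =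
  (U2 N (U1 N x) - U1 N (U2 N x)) + U1 N (U2 N x - iter m (U1 N) (U2 N q)).
  by rewrite /U1 (UopB _ _ _ (U2 N x)) addrA subrK.
apply: (PD HM).
  rewrite comm12; apply: (Ple HM (leq_subr _ _)); apply: (PMr HM); exact: gam_P.
rewrite subnS -subn1; exact: (UopPsub HM).
Qed.

Lemma Uop_sum l kk0 (a0 : A) (I : Type) (r : seq I) (F : I -> A) :
  Uop l kk0 a0 (\sum_(x <- r) F x) = \sum_(x <- r) Uop l kk0 a0 (F x).
Proof.
elim/big_rec2: _ => [|x y1 y2 _ <-]; first exact: Uop0.
by rewrite UopD.
Qed.

Lemma Uop1 l kk0 (a0 : A) : Uop l kk0 a0 1 = 0.
Proof. by rewrite /Uop !mderiv1 mulr0 subrr. Qed.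

Lemma Uop_pow0 l kk0 (a0 : A) (x : A) n : Uop l kk0 a0 x = 0 -> Uop l kk0 a0 (x ^+ n) = 0.
Proof.
move=> H; elim: n => [|n IH]; first by rewrite expr0 Uop1.
by rewrite exprS UopM H IH mul0r mulr0 addr0.
Qed.

Lemma U1nX N : U1 N nX = -1.
Proof. by rewrite /U1 /Uop !dnX eqxx eq_sym (negbTE Hki) oppr0 mulr0 subr0. Qed.
Lemma U1nY N : U1 N nY = 0.
Proof. by rewrite /U1 /Uop !dnY (negbTE Hjk) eq_sym (negbTE Hij) oppr0 mulr0 subr0. Qed.
Lemma U2nX N : U2 N nX = 0.
Proof. by rewrite /U2 /Uop !dnX (negbTE Hij) eq_sym (negbTE Hki) oppr0 mulr0 subr0. Qed.
Lemma U2nY N : U2 N nY = -1.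
Proof. by rewrite /U2 /Uop !dnY eqxx (negbTE Hjk) oppr0 mulr0 subr0. Qed.

Definition W N m n := iter m (U1 N) (iter n (U2 N) Zc).
Definition tm N m n := (fi R m *: nX ^+ m) * ((fi R n *: nY ^+ n) * W N m n).
Definition aa N := \sum_(m < N) \sum_(n < N) tm N m n.

Lemma U1_aa N : P N.-1 (U1 N (aa N)).
Proof.
case: N => [|N] //=.
rewrite /aa /U1 Uop_sum.
under eq_bigr do rewrite Uop_sum.
rewrite exchange_big /=.
apply: (Psum HM) => n.
have -> : \sum_(m < N.+1) Uop i k (al N.+1) (tm N.+1 m n) =
   (fi R n *: nY ^+ n) * \sum_(m < N.+1) Uop i k (al N.+1) (fi R m *: nX ^+ m * W N.+1 m n).
  rewrite mulr_sumr; apply: eq_bigr => m _.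
  have -> : tm N.+1 m n = (fi R n *: nY ^+ n) * (fi R m *: nX ^+ m * W N.+1 m n).
    by rewrite /tm; ring.
  rewrite UopM UopZ Uop_pow0 ?scaler0 ?mul0r ?add0r //.
  exact: U1nY.
rewrite (@telesc R i k (al N.+1) nX (fun m => W N.+1 m n) N); last exact: U1nX.
rewrite big1 ?addr0; last by move=> m _; rewrite /W iterS subrr mulr0.
apply: (PM HM); rewrite -scalerAl; apply: (PZ HM); apply: (PMr HM).
exact: (PX N MnX).
Qed.

Lemma U2_aa N : P N.-1 (U2 N (aa N)).
Proof.
case: N => [|N] //=.
rewrite /aa /U2 Uop_sum.
apply: (Psum HM) => m.
have -> : \sum_(n < N.+1) tm N.+1 m n =
   (fi R m *: nX ^+ m) * \sum_(n < N.+1) (fi R n *: nY ^+ n * W N.+1 m n).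
  by rewrite mulr_sumr; apply: eq_bigr => n _; rewrite /tm mulrA.
rewrite UopM UopZ Uop_pow0 ?scaler0 ?mul0r ?add0r; last exact: U2nX.
rewrite Uop_sum (@telesc R j k (be N.+1) nY (fun n => W N.+1 m n) N); last exact: U2nY.
rewrite mulrDr; apply: (PD HM).
  apply: (PM HM); rewrite -scalerAl; apply: (PZ HM); apply: (PMr HM).
  exact: (PX N MnY).
rewrite mulr_sumr; apply: (Psum HM) => n.
have HE : P (N - m) (Uop j k (be N.+1) (W N.+1 m n) - W N.+1 m n.+1).
  have := err_P N.+1 m (iter n (U2 N.+1) Zc).
  by rewrite /W iterS.
rewrite -!scalerAl; apply: (PZ HM); rewrite -scalerAr; apply: (PZ HM).
rewrite mulrCA; apply: (PM HM).
have Hm : (m <= N)%N by case: m HE => m /= Hm.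
apply: (Ple HM _ (Padd HM (PX m MnX) HE)).
by rewrite -leq_subLR leqnn.
Qed.

Lemma dk_mulM (x s : A) : M x -> mderiv k x = 0 -> P 1 (mderiv k (x * s)).
Proof.
move=> Mx Dx; rewrite mderivM Dx mul0r add0r.
by apply/(P1 HM); case: HM => _ _ HMM; rewrite mulrC; apply: HMM.
Qed.

Lemma dk_aa N : P 1 (mderiv k (aa N.+1) - 1).
Proof.
rewrite /aa big_ord_recl big_ord_recl.
have -> : tm N.+1 ord0 ord0 = Zc.
  by rewrite /tm /W /= !fi0 !expr0 !scale1r !mul1r.
rewrite mderivD mderivD dZ eqxx.
rewrite (_ : forall a b : A, true%:R + a + b - 1 = a + b); last by move=> a b /=; ring.
apply: (PD HM).
  rewrite raddf_sum; apply: (Psum HM) => n.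
  have -> : tm N.+1 ord0 (lift ord0 n) = nY * ((fi R (lift ord0 n) *: nY ^+ n) * W N.+1 0 (lift ord0 n)).
    by rewrite /tm /= fi0 expr0 scale1r mul1r exprS scalerAr -mulrA.
  by apply: dk_mulM; [exact: MnY | rewrite dnY (negbTE Hjk) oppr0].
rewrite raddf_sum; apply: (Psum HM) => m.
rewrite raddf_sum; apply: (Psum HM) => n.
have -> : tm N.+1 (lift ord0 m) n = nX * ((fi R (lift ord0 m) *: nX ^+ m) * ((fi R n *: nY ^+ n) * W N.+1 (lift ord0 m) n)).
  by rewrite /tm /= exprS scalerAr -mulrA.
by apply: dk_mulM; [exact: MnX | rewrite dnX eq_sym (negbTE Hki) oppr0].
Qed.

Lemma kk_diff N : P N (kk N.+1 - kk N).
Proof.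
rewrite /kk big_ord_recr /= mulrDr addrAC subrr add0r.
apply: (PM HM); exact: (PX N Mww).
Qed.

Lemma iter_diff l0 (a a' : A) N s q q' t : P N (a' - a) -> (s <= N)%N -> P s (q' - q) ->
  P (s - t) (iter t (Uop l0 k a') q' - iter t (Uop l0 k a) q).
Proof.
move=> Ha Hs Hq; elim: t => [|t IH]; first by rewrite subn0.
rewrite !iterS.
set x' := iter t _ q'; set x := iter t _ q.
have -> : Uop l0 k a' x' - Uop l0 k a x = (Uop l0 k a' x' - Uop l0 k a x') + Uop l0 k a (x' - x).
  by rewrite UopB addrA subrK.
apply: (PD HM); last by rewrite subnS -subn1; apply: (UopPsub HM).
have -> : Uop l0 k a' x' - Uop l0 k a x' = - ((a' - a) * mderiv k x') by rewrite /Uop; ring.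
apply: (PN HM); apply: (PMr HM); apply: (Ple HM _ Ha).
by apply: leq_trans (leq_subr _ _) Hs.
Qed.

Lemma W_diff N m n : P (N - n - m) (W N.+1 m n - W N m n).
Proof.
have Ha : P N (al N.+1 - al N) by rewrite /al -mulrBr; apply: (PM HM); exact: kk_diff.
have Hb : P N (be N.+1 - be N) by rewrite /be -mulrBr; apply: (PM HM); exact: kk_diff.
rewrite /W /U1 /U2.
have := @iter_diff i (al N) (al N.+1) N (N - n) (iter n (Uop j k (be N)) Zc) (iter n (Uop j k (be N.+1)) Zc) m Ha (leq_subr _ _). apply.
have := @iter_diff j (be N) (be N.+1) N N Zc Zc n Hb (leqnn N); apply.
by rewrite subrr; exact: (P0 HM).
Qed.

Lemma ac4 (a b c d : A) : a + b + c - d = a - d + b + c.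
Proof. by rewrite addrAC [a - d + b]addrAC. Qed.

Lemma aa_diff N : P N (aa N.+1 - aa N).
Proof.
have E : aa N.+1 - aa N =
  \sum_(m < N) \sum_(n < N) (tm N.+1 m n - tm N m n) +
  \sum_(m < N) tm N.+1 m N + \sum_(n < N.+1) tm N.+1 N n.
  rewrite /aa big_ord_recr /=.
  under eq_bigr do rewrite big_ord_recr /=.
  rewrite big_split /=.
  under [X in _ = X + _ + _]eq_bigr do rewrite sumrB.
  rewrite sumrB.
  by apply: ac4.
rewrite E; apply: (PD HM); first apply: (PD HM).
- apply: (Psum HM) => m; apply: (Psum HM) => n.
  rewrite /tm -mulrBr -mulrBr mulrA -!scalerAl -scalerAr -scalerAl.
  apply: (PZ HM); apply: (PZ HM).
  apply: (Ple HM _ (Padd HM (Padd HM (PX m MnX) (PX n MnY)) (W_diff N m n))).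
  by rewrite -subnDA -leq_subLR addnC leqnn.
- apply: (Psum HM) => m; rewrite /tm mulrCA -!scalerAl; apply: (PZ HM).
  by apply: (PMr HM); exact: (PX N MnY).
- apply: (Psum HM) => n; rewrite /tm -!scalerAl; apply: (PZ HM).
  by apply: (PMr HM); exact: (PX N MnX).
Qed.

Definition sinv n (u : A) : A := \sum_(t < n) (1 - u) ^+ t.

Lemma sinv_eq n u : 1 - u * sinv n u = (1 - u) ^+ n.
Proof.
have H := subrX1 (1 - u) n.
have E : u * sinv n u = - (((1 - u) - 1) * sinv n u) by ring.
rewrite E /sinv -H; ring.
Qed.

Lemma one_minus_P n N : P n (1 - mderiv k (aa N.+1) * sinv n (mderiv k (aa N.+1))).
Proof.
rewrite sinv_eq; apply: PX.
have := dk_aa N; move/(P1 HM) => H.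
by rewrite -opprB /Mker mevalN H oppr0.
Qed.

Definition bb n : A := h * sinv n (mderiv k (aa n.+1)).

Lemma core_i n : P n (f - bb n * mderiv i (aa n.+1)).
Proof.
set u := mderiv k (aa n.+1); set S := sinv n u.
have HU := U1_aa n.+1; rewrite /= in HU.
have HE : P n (h * U1 n.+1 (aa n.+1) + (h * kk n.+1 - 1) * f * u).
  apply: (PD HM); first by apply: (PM HM).
  by apply: (PMr HM); apply: (PMr HM); exact: (PSn HM (ee_P _)).
have -> : f - bb n * mderiv i (aa n.+1) =
   f * (1 - u * S) - S * (h * U1 n.+1 (aa n.+1) + (h * kk n.+1 - 1) * f * u).
  rewrite /bb /U1 /Uop /al -/u -/S; ring.
apply: (PB HM); last by apply: (PM HM).
by apply: (PM HM); exact: one_minus_P.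
Qed.

Lemma core_j n : P n (g - bb n * mderiv j (aa n.+1)).
Proof.
set u := mderiv k (aa n.+1); set S := sinv n u.
have HU := U2_aa n.+1; rewrite /= in HU.
have HE : P n (h * U2 n.+1 (aa n.+1) + (h * kk n.+1 - 1) * g * u).
  apply: (PD HM); first by apply: (PM HM).
  by apply: (PMr HM); apply: (PMr HM); exact: (PSn HM (ee_P _)).
have -> : g - bb n * mderiv j (aa n.+1) =
   g * (1 - u * S) - S * (h * U2 n.+1 (aa n.+1) + (h * kk n.+1 - 1) * g * u).
  rewrite /bb /U2 /Uop /be -/u -/S; ring.
apply: (PB HM); last by apply: (PM HM).
by apply: (PM HM); exact: one_minus_P.
Qed.

Lemma core_k n : P n (h - bb n * mderiv k (aa n.+1)).
Proof.
have -> : h - bb n * mderiv k (aa n.+1) = h * (1 - mderiv k (aa n.+1) * sinv n (mderiv k (aa n.+1))).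
  by rewrite /bb; ring.
by apply: (PM HM); exact: one_minus_P.
Qed.

Lemma bb_diff n : P n (bb n.+1 - bb n).
Proof.
rewrite /bb -mulrBr; apply: (PM HM).
set u' := mderiv k (aa n.+2); set u := mderiv k (aa n.+1).
set S2 := sinv n.+1 u'; set S1 := sinv n u.
have -> : S2 - S1 = S2 * (1 - u * S1) + S1 * S2 * (u - u') - S1 * (1 - u' * S2) by ring.
apply: (PB HM); first apply: (PD HM).
- by apply: (PM HM); exact: one_minus_P.
- apply: (PM HM); rewrite -opprB -mderivB; apply: (PN HM).
  apply: (Pderiv HM); [exact: mderivD | exact: mderivM | exact: aa_diff].
- by apply: (PM HM); apply: (PSn HM); exact: one_minus_P.
Qed.

Lemma core_all : exists a b : nat -> A,
  [/\ compl_elt M a, compl_elt M b,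
     (forall n, P n (f - b n * mderiv i (a n.+1))),
     (forall n, P n (g - b n * mderiv j (a n.+1))) &
     (forall n, P n (h - b n * mderiv k (a n.+1)))].
Proof.
exists aa, bb; split.
- exact: aa_diff.
- exact: bb_diff.
- exact: core_i.
- exact: core_j.
- exact: core_k.
Qed.

End Core.

Theorem theorem2p4 (R : realType) (f g h : polyA R) :
  poisson_triple f g h -> cm_exact f g h.
Proof.
move=> HP; have I := poisson_integrable HP.
have ne01 : (0 : 'I_3) != 1 by [].
have ne12 : (1 : 'I_3) != 2 by [].
have ne20 : (2 : 'I_3) != 0 by [].
case: (eqVneq h 0) => [Hh0|Hh].
- case: (eqVneq f 0) => [Hf0|Hf].
  + case: (eqVneq g 0) => [Hg0|Hg].
    * exists (Mker (fun _ => 0)); split; first exact: Mker_max.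
      exists (fun _ => 0), (fun _ => 0); split.
      -- by move=> n; rewrite subrr; exact: (P0 (Mker_ideal _)).
      -- by move=> n; rewrite subrr; exact: (P0 (Mker_ideal _)).
      -- by move=> n; rewrite /compl_of /compl_mul Hf0 mul0r subrr; exact: (P0 (Mker_ideal _)).
      -- by move=> n; rewrite /compl_of /compl_mul Hg0 mul0r subrr; exact: (P0 (Mker_ideal _)).
      -- by move=> n; rewrite /compl_of /compl_mul Hh0 mul0r subrr; exact: (P0 (Mker_ideal _)).
    * have [v Hv] := exists_point Hg.
      have I' : h * (g^`M(0) - f^`M(1)) + f * (h^`M(1) - g^`M(2)) + g * (f^`M(2) - h^`M(0)) = 0.
        by rewrite -I; ring.
      have [a [b [Ha Hb H1 H2 H3]]] := core_all ne20 ne01 ne12 I' Hv.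
      exists (Mker v); split; first exact: Mker_max.
      by exists a, b; split; [exact: Ha | exact: Hb | exact: H2 | exact: H3 | exact: H1].
  + have [v Hv] := exists_point Hf.
    have I' : g * (f^`M(2) - h^`M(0)) + h * (g^`M(0) - f^`M(1)) + f * (h^`M(1) - g^`M(2)) = 0.
      by rewrite -I; ring.
    have [a [b [Ha Hb H1 H2 H3]]] := core_all ne12 ne20 ne01 I' Hv.
    exists (Mker v); split; first exact: Mker_max.
    by exists a, b; split; [exact: Ha | exact: Hb | exact: H3 | exact: H1 | exact: H2].
- have [v Hv] := exists_point Hh.
  have [a [b [Ha Hb H1 H2 H3]]] := core_all ne01 ne12 ne20 I Hv.
  exists (Mker v); split; first exact: Mker_max.
  by exists a, b; split; [exact: Ha | exact: Hb | exact: H1 | exact: H2 | exact: H3].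
Qed.
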